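(* Let $\Omega\subset\mathbb{C}^n$ be a Reinhardt domain and let $A$ be a Banach space of holomorphic functions on $\Omega$ such that for each $z\in\Omega$ the evaluation functional $f\mapsto f(z)$ is continuous on $A$. Then for every $m>0$ the series $$\sum_{\alpha\in\mathbb{Z}^n,\ e_\alpha\in A}\frac{e_\alpha}{\|e_\alpha\|_A^m}$$ converges locally normally on $\Omega^{(m)}$.
   Context: $\Omega$ Reinhardt means invariant under $z\mapsto(e^{i\theta_1}z_1,\dots,e^{i\theta_n}z_n)$ for all $\theta\in\mathbb{R}^n$. $e_\alpha(z)=z_1^{\alpha_1}\cdots z_n^{\alpha_n}$. The $m$-th Reinhardt power of $\Omega$ is $\Omega^{(m)}=\{z\in\mathbb{C}^n:(|z_1|^{1/m},\dots,|z_n|^{1/m})\in\Omega\}$. A series of functions $\sum_\alpha h_\alpha$ converges locally normally on a domain $D$ if for every compact $K\subset D$, $\sum_\alpha\sup_K|h_\alpha|<\infty$. *)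

(* Defs.v *)
From HB Require Import structures.
From mathcomp Require Import all_boot all_order all_algebra.
From mathcomp Require Import all_classical all_reals all_analysis.
From mathcomp Require Export complex.
Set Implicit Arguments. Unset Strict Implicit. Unset Printing Implicit Defensive.
Import Order.TTheory GRing.Theory Num.Theory.
Import numFieldTopology.Exports numFieldNormedType.Exports.
Local Open Scope classical_set_scope.
Local Open Scope ring_scope.
Local Open Scope complex_scope.

Section Defs.
Variable R : realType.
(* C is the complex field R[i], seen (via ^o) with its canonical normed/topological
   structure; C^n is 'rV[C]_n with the (sup-)norm topology. *)
Local Notation C := ((R[i])^o).

Definition emono n (alpha : 'rV[int]_n) (z : 'rV[C]_n) : C :=
  \prod_(j < n) (z ord0 j) ^ (alpha ord0 j).

Definition is_domain n (Omega : set 'rV[C]_n) : Prop :=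
  Omega !=set0 /\ open Omega /\ connected Omega.

Definition reinhardt n (Omega : set 'rV[C]_n) : Prop :=
  forall (z : 'rV[C]_n) (theta : 'rV[R]_n), Omega z ->
    Omega (\row_j ((cos (theta ord0 j) +i* sin (theta ord0 j)) * z ord0 j)).

Definition reinhardt_power n (Omega : set 'rV[C]_n) (m : R) : set 'rV[C]_n :=
  [set z : 'rV[C]_n | Omega (\row_j ((powR (complex.Re `|z ord0 j|) (m^-1))%:C))].

(* A (a Banach space over C) is a Banach space of holomorphic functions on
   Omega via iota : A -> (C^n -> C): iota is linear, injective as a map into
   functions on Omega, every iota a is holomorphic (complex-Frechet
   differentiable) on Omega, and point evaluations are continuous. *)
Definition holo_banach n (Omega : set 'rV[C]_n) (A : completeNormedModType C)
  (iota : A -> 'rV[C]_n -> C) : Prop :=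
  [/\ (forall a b z, Omega z -> iota (a + b) z = iota a z + iota b z),
      (forall (k : C) a z, Omega z -> iota (k *: a) z = k * iota a z),
      (forall a b, (forall z, Omega z -> iota a z = iota b z) -> a = b),
      (forall a z, Omega z -> differentiable (iota a : 'rV[C]_n -> C) z) &
      (forall z, Omega z -> continuous (fun a => iota a z))].

Definition mono_rep n (Omega : set 'rV[C]_n) (A : completeNormedModType C)
  (iota : A -> 'rV[C]_n -> C) (alpha : 'rV[int]_n) : set A :=
  [set a | forall z, Omega z -> iota a z = emono alpha z].

(* e_alpha as an element of A (unique by injectivity of iota, when it exists) *)
Definition monoA n (Omega : set 'rV[C]_n) (A : completeNormedModType C)
  (iota : A -> 'rV[C]_n -> C) (alpha : 'rV[int]_n) : A :=
  xget 0 (mono_rep Omega iota alpha).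

End Defs.

(* Main.v *)
Require Import Defs.
From HB Require Import structures.
From mathcomp Require Import all_boot all_order all_algebra.
From mathcomp Require Import all_classical all_reals all_analysis.
From mathcomp Require Import complex.
From mathcomp Require Import lra ring zify.
Import Order.TTheory GRing.Theory Num.Theory.
Import numFieldTopology.Exports numFieldNormedType.Exports.
Local Open Scope classical_set_scope.
Local Open Scope ring_scope.
Section S.
Variable R : realType.
Local Notation C := ((R[i])^o).
Definition nz (x : C) : R := complex.Re `|x|.
Lemma nzE (x : C) : `|x| = (nz x)%:C%C.
Proof.
have h : (0:C) <= `|x| by [].
rewrite /nz; rewrite [LHS]complexE ger0_Im // mulr0 addr0 //.
Qed.
Lemma ball_rV n (x y : 'rV[C]_n) (e : R) :
  ball x (e%:C)%C y <-> (0 < e /\ forall j, nz (x ord0 j - y ord0 j) < e).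
Proof.
rewrite /ball /= /mx_ball ltcR; split => -[e0 h]; split => //.
  move=> j; have := h ord0 j; rewrite /ball /= nzE ltcR //.
move=> i j; rewrite /ball /= nzE ltcR; rewrite (ord1 i); exact: h.
Qed.
Lemma nzR (r : R) : nz (r%:C)%C = `|r|.
Proof. by rewrite /nz normc_def /= expr0n /= addr0 sqrtr_sqr. Qed.
Lemma nz_ge0 x : 0 <= nz x.
Proof. by rewrite /nz; have : (0:C) <= `|x| by []; rewrite lecE => /andP[]. Qed.
Lemma nzM x y : nz (x * y) = nz x * nz y.
Proof. by apply: complexI; rewrite rmorphM /= -!nzE normrM. Qed.
Lemma nzlt (x : C) (e : R) : (`|x| < e%:C%C) = (nz x < e).
Proof. by rewrite nzE ltcR. Qed.
Lemma nzle (x : C) (e : R) : (`|x| <= e%:C%C) = (nz x <= e).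
Proof. by rewrite nzE lecR. Qed.
Lemma nz_eq0 x : (nz x == 0) = (x == 0).
Proof. rewrite -[RHS]normr_eq0 nzE; apply/eqP/eqP => [->//|[]//]. Qed.
Lemma nzXz x (k : int) : nz (x ^ k) = nz x ^ k.
Proof.
apply: complexI; rewrite -nzE.
have -> : `|x ^ k| = `|x| ^ k.
  case: k => k; first by rewrite normrX.
  by rewrite !NegzE -!exprnN normfV normrX.
rewrite nzE; exact/esym/(fmorphXz (real_complex R)).
Qed.
Lemma nz_dist x y : `|nz x - nz y| <= nz (x - y).
Proof.
have := ler_dist_dist x y; rewrite !nzE -rmorphB /= -nzE -nzR.
by rewrite nzle.
Qed.
Lemma nz_prod (I : finType) (F : I -> C) : nz (\prod_i F i) = \prod_i nz (F i).
Proof. by apply: complexI; rewrite rmorph_prod -nzE normr_prod; apply: eq_bigr => i _; rewrite nzE. Qed.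
Lemma nz_emono n (al : 'rV[int]_n) z :
  nz (emono al z) = \prod_j nz (z ord0 j) `^ ((al ord0 j)%:~R).
Proof. rewrite /emono nz_prod; apply: eq_bigr => j _; rewrite nzXz powR_intmul // nz_ge0 //. Qed.

Definition nA (A : normedModType C) (a : A) : R := complex.Re `|a|.
Arguments nA {A} a.
Lemma nAE (A : normedModType C) (a : A) : `|a| = (nA a)%:C%C.
Proof.
have h : (0:C) <= `|a| by [].
rewrite /nA; rewrite [LHS]complexE ger0_Im // mulr0 addr0 //.
Qed.
Lemma nA_ge0 (A : normedModType C) (a : A) : 0 <= nA a.
Proof. by rewrite /nA; have : (0:C) <= `|a| by []; rewrite lecE => /andP[]. Qed.

Lemma eval_bound n (Omega : set 'rV[C]_n) (A : completeNormedModType C)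
  (iota : A -> 'rV[C]_n -> C) p :
  holo_banach Omega iota -> Omega p ->
  exists c : R, 0 < c /\ forall a, nz (iota a p) <= c * nA a.
Proof.
case=> hadd hscal _ _ hcont Op.
have f0 : iota 0 p = 0.
  have := hadd 0 0 p Op; rewrite addr0 => /(congr1 (fun t => t - iota 0 p)).
  by rewrite subrr addrK.
have := hcont p Op 0; move/cvg_ballP => /(_ _ ltr01).
move/nbhs_ballP => [e e0 he].
have {}e0 : (0 : R[i]) < e := e0.
have e'0 : 0 < complex.Re e by move: e0; rewrite ltcE => /andP[].
have eE : e = (complex.Re e)%:C%C.
  by rewrite [LHS]complexE ger0_Im ?mulr0 ?addr0 // ltW.
exists (2 / complex.Re e); split; first by rewrite divr_gt0.
move=> a.
have [->|a0] := eqVneq a 0.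
  by rewrite f0 /nA normr0 /= mulr0 /nz normr0.
have nu0 : 0 < nA a.
  by rewrite lt_neqAle nA_ge0 andbT eq_sym -(inj_eq (@complexI R)) -nAE normr_eq0.
set k := complex.Re e / (2 * nA a).
have k0 : 0 < k by rewrite divr_gt0 // mulr_gt0.
have : ball (0:A) e (k%:C%C *: a).
  rewrite -ball_normE /= sub0r normrN normrZ [`|a|]nAE nzE nzR ger0_norm ?(ltW k0) //.
  rewrite -rmorphM /= [X in _ < X]eE ltcR /k -mulrA mulrC gtr_pMl //.
  by rewrite invfM -mulrA mulVf ?gt_eqF // mulr1 invf_lt1 // ltr1n.
move/he; rewrite /ball /= f0 sub0r normrN hscal // nzlt nzM nzR ger0_norm ?(ltW k0) //.
rewrite -ltr_pdivlMl // mulr1 => /ltW /le_trans; apply.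
by rewrite /k invf_div mulrAC.
Qed.
Lemma pow_lb1 (x : R) (k : int) : 0 < x -> x <= 1 -> x ^+ `|k|%N <= x ^ k.
Proof.
move=> x0 x1; case: k => k; first exact: lexx.
rewrite NegzE -exprnN /= (le_trans (exprn_ile1 _ (ltW x0) x1)) //.
by rewrite invf_ge1 ?exprn_ile1 ?exprn_gt0 // ltW.
Qed.
Lemma pow_lb2 (x : R) (k : int) : 0 < x -> x <= 1 -> k <= -1 -> x^-1 <= x ^ k.
Proof.
move=> x0 x1; case: k => k; first by [].
move=> _; rewrite NegzE -exprnN lef_pV2 ?posrE ?exprn_gt0 //.
by rewrite exprS ler_piMr ?exprn_ile1 // ltW.
Qed.
Lemma monoA_rep n (Omega : set 'rV[C]_n) (A : completeNormedModType C)
  (iota : A -> 'rV[C]_n -> C) al :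
  mono_rep Omega iota al !=set0 ->
  forall p, Omega p -> iota (monoA Omega iota al) p = emono al p.
Proof. by move=> [a ha]; apply: (xgetPex 0 (ex_intro _ a ha)). Qed.

Lemma excl n (Omega : set 'rV[C]_n) (A : completeNormedModType C)
  (iota : A -> 'rV[C]_n -> C) (al : 'rV[int]_n) w j :
  holo_banach Omega iota -> open Omega -> mono_rep Omega iota al !=set0 ->
  Omega w -> w ord0 j = 0 -> 0 <= al ord0 j.
Proof.
move=> hb oO [a ha] Ow wj0; case: (hb) => _ _ _ hdiff _.
rewrite leNgt; apply/negP => aj.
have cont := differentiable_continuous (hdiff a w Ow).
have : \forall z \near w, Omega z /\ ball (iota a w) 1 (iota a z).
  have Onb : nbhs w Omega by apply: open_nbhs_nbhs; split.
  near=> z; split; first by near: z.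
  near: z; move/cvg_ballP : cont; apply => //.
move/nbhs_ballP => [e e0 he].
have {}e0 : (0 : R[i]) < e := e0.
have e'0 : 0 < complex.Re e by move: e0; rewrite ltcE => /andP[].
have eE : e = (complex.Re e)%:C%C.
  by rewrite [LHS]complexE ger0_Im ?mulr0 ?addr0 // ltW.
set e' := complex.Re e.
set B := nz (emono al w) + 1.
have B0 : 0 < B by rewrite /B ltr_wpDl ?nz_ge0.
set T := (\sum_k `|al ord0 k|)%N.
set m := fun k => if w ord0 k == 0 then 1 else Num.min (nz (w ord0 k) ^ al ord0 k) 1.
have m0 : forall k, 0 < m k.
  move=> k; rewrite /m; case: eqP => // /eqP wk.
  by rewrite lt_min ltr01 andbT exprz_gt0 // lt_neqAle nz_ge0 andbT eq_sym nz_eq0.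
set Q := \prod_(k | k != j) m k.
have Q0 : 0 < Q by apply: prodr_gt0 => k _; exact: m0.
set tau := Num.min (e' / 2) (Num.min (1/2) (Q / (2 * B))).
have t0 : 0 < tau by rewrite !lt_min !divr_gt0 ?mulr_gt0 ?ltr0n.
have t1 : tau <= 1.
  rewrite /tau !ge_min; apply/orP; right; apply/orP; left; lra.
have te : tau < e' by rewrite /tau gt_min ltr_pdivrMr ?ltr0n // ltr_pMr ?ltr1n.
have tQ : tau <= Q / (2 * B) by rewrite /tau !ge_min lexx !orbT.
set z := \row_k (if w ord0 k == 0 then (if k == j then (tau ^+ T.+1)%:C%C else tau%:C%C) else w ord0 k).
have [Oz bz] : Omega z /\ ball (iota a w) 1 (iota a z).
  apply: he; rewrite eE ball_rV; split => // k.
  rewrite /z mxE; case: eqP => [->|_]; last by rewrite subrr /nz normr0 /=.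
  rewrite sub0r /nz normrN -/(nz _).
  case: eqP => _; rewrite nzR ger0_norm ?exprn_ge0 ?ltW //.
  by rewrite (le_lt_trans _ te) // -[leRHS]expr1 ler_wiXn2l // ltW.
move: bz; rewrite /ball /= !ha // nzlt => bz.
have zB : nz (emono al z) < B.
  have h1 := le_trans (ler_norm _) (nz_dist (emono al z) (emono al w)).
  have h2 : nz (emono al z - emono al w) = nz (emono al w - emono al z) by rewrite /nz distrC.
  move: h1; rewrite h2 lerBlDl => /le_lt_trans; apply.
  by rewrite /B ltrD2l.
have aj' : al ord0 j <= -1 by lia.
have tT0 : 0 < tau ^+ T.+1 by rewrite exprn_gt0.
have f1 : (tau ^+ T.+1)^-1 <= nz (z ord0 j) ^ al ord0 j.
  rewrite /z mxE wj0 !eqxx nzR ger0_norm; last by rewrite ltW.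
  by apply: pow_lb2 => //; rewrite exprn_ile1 // ltW.
have f2 : Q * tau ^+ T <= \prod_(k | k != j) nz (z ord0 k) ^ al ord0 k.
  apply: (@le_trans _ _ (\prod_(k | k != j) (m k * tau ^+ `|al ord0 k|%N))).
    rewrite big_split /= ler_pM2l // -expr_sum ler_wiXn2l // ?ltW //.
    by rewrite /T [X in (_ <= X)%N](bigD1 j) //= leq_addl.
  apply: ler_prod => k kj; rewrite mulr_ge0 ?exprn_ge0 ?(ltW (m0 k)) ?(ltW t0) //=.
  rewrite /z mxE; case: eqP => wk.
    by rewrite /m wk eqxx (negbTE kj) nzR ger0_norm ?(ltW t0) // mul1r pow_lb1.
  apply: (le_trans (ler_piMr (ltW (m0 k)) (exprn_ile1 _ (ltW t0) t1))).
  by rewrite /m; case: eqP => // _; rewrite ge_min lexx.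
have : Q / tau <= nz (emono al z).
  rewrite /emono nz_prod (bigD1 j) //=.
  under eq_bigr do rewrite nzXz.
  rewrite nzXz.
  apply: le_trans (ler_pM _ _ f1 f2); last 2 first.
  - by rewrite invr_ge0 exprn_ge0 // ltW.
  - by rewrite mulr_ge0 ?exprn_ge0 // ltW.
  have tT : tau ^+ T != 0 by rewrite expf_neq0 // gt_eqF.
  rewrite le_eqVlt; apply/orP; left; apply/eqP.
  rewrite exprS; field; rewrite tT gt_eqF //.
move=> h.
have h2 : 2 * B <= Q / tau.
  by rewrite ler_pdivlMr // mulrC -ler_pdivlMr ?mulr_gt0.
have : B < 2 * B by rewrite mulr_natl mulr2n ltr_pwDl.
move/lt_le_trans/(_ (le_trans h2 h)); rewrite ltNge => /negP; apply.
exact: ltW.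
Unshelve. all: end_near.
Qed.
Lemma coord_ineq (y P t : R) (k : int) : 0 <= y -> 0 < P -> 0 < t ->
  (0 < k -> y <= t * P) -> (k < 0 -> P / t <= y) -> y ^ k <= P ^ k * t ^+ `|k|%N.
Proof.
move=> y0 P0 t0; case: k => k h1 h2.
  case: k h1 h2 => [|k] h1 h2; first by rewrite /= !expr0 mulr1.
  rewrite /= -exprMn mulrC; apply: lerXn2r; rewrite ?nnegrE ?mulr_ge0 //; try exact: ltW.
  exact: (h1 isT).
have := h2 isT; rewrite NegzE => h.
have yp : 0 < y by apply: lt_le_trans h; rewrite divr_gt0.
rewrite -!exprnN /=.
have -> : P ^- k.+1 * t ^+ k.+1 = ((P / t) ^+ k.+1)^-1 by rewrite exprMn exprVn invfM invrK mulrC.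
rewrite lef_pV2 ?posrE ?exprn_gt0 ?mulr_gt0 ?invr_gt0 //.
by apply: lerXn2r; rewrite ?nnegrE ?mulr_ge0 ?invr_ge0 //; exact: ltW.
Qed.
Lemma powR_prod (I : finType) (f : I -> R) (m : R) :
  (forall i, 0 <= f i) -> (\prod_i f i) `^ m = \prod_i (f i) `^ m.
Proof.
move=> f0.
suff: (\prod_i f i) `^ m = \prod_i f i `^ m /\ 0 <= \prod_i f i by case.
elim/big_rec2: _ => [|i y1 y2 _ [<- y0]]; first by rewrite powR1 ler01.
by split; [rewrite powRM | exact: mulr_ge0].
Qed.
Lemma powRXz (x m : R) (k : int) : 0 <= x -> (x ^ k) `^ m = (x `^ m) ^ k.
Proof. by move=> x0; rewrite -powR_intmul // powRAC powR_intmul // powR_ge0. Qed.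

Lemma le_sum1 n (f : 'I_n -> R) j : (forall k, 0 <= f k) -> f j <= \sum_k f k.
Proof. by move=> f0; rewrite (bigD1 j) //= ler_wpDr // sumr_ge0. Qed.

Lemma near_pts n (Omega : set 'rV[C]_n) (w0r : 'I_n -> R) :
  open Omega -> Omega (\row_j (w0r j)%:C%C) -> (forall j, 0 <= w0r j) ->
  exists dl eta : R, 0 < dl /\ 0 < eta /\ forall (sg : 'I_n -> bool),
    Omega (\row_j (if w0r j == 0 then eta else
                   if sg j then w0r j * (1 + dl) else w0r j / (1 + dl))%:C%C).
Proof.
move=> oO Ow w0.
have : nbhs (\row_j (w0r j)%:C%C : 'rV[C]_n) Omega by apply: open_nbhs_nbhs; split.
move/nbhs_ballP => [e e0 he].
have {}e0 : (0 : R[i]) < e := e0.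
have e'0 : 0 < complex.Re e by move: e0; rewrite ltcE => /andP[].
have eE : e = (complex.Re e)%:C%C.
  by rewrite [LHS]complexE ger0_Im ?mulr0 ?addr0 // ltW.
set r := complex.Re e in e'0 eE.
set W := 1 + \sum_k w0r k.
have W0 : 0 < W by rewrite ltr_pwDl ?sumr_ge0.
have wW : forall j, w0r j <= W.
  by move=> j; rewrite (le_trans (@le_sum1 n w0r j w0)) // ler_wpDl.
exists (r / (2 * W)), (r / 2); split; first by rewrite divr_gt0 ?mulr_gt0.
split; first by rewrite divr_gt0.
move=> sg; apply: he; rewrite eE ball_rV; split => // j.
rewrite !mxE -rmorphB nzR.
have dl0 : 0 < r / (2 * W) by rewrite divr_gt0 ?mulr_gt0.
have key : w0r j * (r / (2 * W)) < r.
  rewrite mulrA ltr_pdivrMr ?mulr_gt0 // mulrC ltr_pM2l //.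
  by apply: le_lt_trans (wW j) _; rewrite mulr_natl mulr2n ltr_pwDr.
case: eqP => [->|_]; first by rewrite sub0r normrN gtr0_norm ?divr_gt0 // ltr_pdivrMr // ltr_pMr // ltr1n.
case: (sg j).
  rewrite mulrDr mulr1 opprD addrA subrr sub0r normrN ger0_norm //.
  by rewrite mulr_ge0 ?w0 // ltW.
set dl := r / (2 * W) in dl0 key *.
have d1 : 1 + dl != 0 by rewrite gt_eqF // addr_gt0.
have -> : w0r j - w0r j / (1 + dl) = w0r j * dl / (1 + dl) by field.
have d1' : 0 < 1 + dl by rewrite addr_gt0.
have wd : 0 <= w0r j * dl by rewrite mulr_ge0 ?w0 // ltW.
rewrite ger0_norm ?divr_ge0 //; last exact: ltW.
apply: le_lt_trans key; rewrite ler_pdivrMr //.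
by rewrite ler_peMr // lerDl ltW.
Qed.
Lemma tq_ineq (Q a : R) : 0 < Q -> Q < 1 -> 0 < a ->
  a * Q / ((1 + Q) / 2) <= a - a * ((1 - Q) / (1 + Q)) /\
  a + a * ((1 - Q) / (1 + Q)) <= (1 + Q) / 2 * (a / Q).
Proof.
move=> Q0 Q1 a0.
have q1 : 1 + Q != 0 by rewrite gt_eqF // addr_gt0.
have q0 : Q != 0 by rewrite gt_eqF.
split.
  rewrite le_eqVlt; apply/orP; left; apply/eqP; field.
  by [].
rewrite -subr_ge0.
have -> : (1 + Q) / 2 * (a / Q) - (a + a * ((1 - Q) / (1 + Q))) =
  a * (1 - Q) ^+ 2 / (2 * Q * (1 + Q)).
  by field; rewrite q1 q0.
apply: divr_ge0; first by rewrite mulr_ge0 ?sqr_ge0 // ltW.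
by rewrite ltW // !mulr_gt0 // addr_gt0.
Qed.
Lemma powR_invx (y m : R) : 0 <= y -> (y^-1) `^ m = (y `^ m)^-1.
Proof. by move=> y0; rewrite -powR_inv1 // powRAC powR_inv1 // powR_ge0. Qed.

Lemma local_bound n (Omega : set 'rV[C]_n) (A : completeNormedModType C)
  (iota : A -> 'rV[C]_n -> C) (m : R) z0 :
  holo_banach Omega iota -> open Omega -> 0 < m -> reinhardt_power Omega m z0 ->
  exists Cc t : R, [/\ 0 < Cc, 0 < t, t < 1 &
  \forall z \near z0, forall al, mono_rep Omega iota al !=set0 ->
     nz (emono al z) / (nA (monoA Omega iota al)) `^ m <= Cc * \prod_j t ^+ `|al ord0 j|%N].
Proof.
move=> hb oO m0 Oz0.
set a := fun j => nz (z0 ord0 j).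
set w0r := fun j => a j `^ m^-1.
have Ow0 : Omega (\row_j (w0r j)%:C%C) := Oz0.
have w0 : forall j, 0 <= w0r j by move=> j; exact: powR_ge0.
have wz : forall j, (w0r j == 0) = (a j == 0).
  by move=> j; rewrite powR_eq0 invr_eq0 (gt_eqF m0) andbT.
have wa : forall j, w0r j `^ m = a j.
  by move=> j; rewrite -powRrM mulVf ?gt_eqF // powRr1 // nz_ge0.
have [dl [eta [dl0 [eta0 hp]]]] := @near_pts n Omega w0r oO Ow0 w0.
set pr := fun (sg : 'I_n -> bool) j => if w0r j == 0 then eta else
             if sg j then w0r j * (1 + dl) else w0r j / (1 + dl).
have : forall sg : {ffun 'I_n -> bool}, exists c, 0 < c /\
    forall b, nz (iota b (\row_j (pr sg j)%:C%C)) <= c * nA b.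
  by move=> sg; exact: (@eval_bound n Omega A iota _ hb (hp sg)).
case/fin_all_exists => cf hcf.
set c := 1 + \sum_sg cf sg.
have c0 : 0 < c by rewrite ltr_pwDl // sumr_ge0 // => sg _; rewrite ltW //; case: (hcf sg).
have cfc : forall sg, cf sg <= c.
  move=> sg; rewrite /c ler_wpDl // (bigD1 sg) //= ler_wpDr // sumr_ge0 // => sg' _.
  by rewrite ltW //; case: (hcf sg').
set D := (1 + dl) `^ m.
have D1 : 1 < D.
  have -> : (1:R) = 1 `^ m by rewrite powR1.
  rewrite /D; apply: gt0_ltr_powR; rewrite ?nnegrE ?ltrDl //.
  by rewrite addr_ge0 // ltW.
have D0 : 0 < D by apply: lt_trans D1.
set Q := D^-1.
have Q0 : 0 < Q by rewrite invr_gt0.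
have Q1 : Q < 1 by rewrite invf_lt1.
set t := (1 + Q) / 2.
have t0 : 0 < t by rewrite divr_gt0 // addr_gt0.
have t1 : t < 1 by rewrite ltr_pdivrMr // mul1r; lra.
exists (c `^ m), t; split => //; first exact: powR_gt0.
pose cond := fun j (z : 'rV[C]_n) =>
    (a j == 0 -> nz (z ord0 j) <= t * eta `^ m) /\
    (a j != 0 -> a j / D / t <= nz (z ord0 j) <= t * (a j * D)).
have hj : forall j, \forall z \near z0, cond j z.
  move=> j.
  set kap := (1 - Q) / (1 + Q).
  have kap0 : 0 < kap by rewrite divr_gt0 ?subr_gt0 ?addr_gt0.
  set e := if a j == 0 then t * eta `^ m else a j * kap.
  have e0 : 0 < e.
    rewrite /e; case: eqP => [_|/eqP aj]; first by rewrite mulr_gt0 ?powR_gt0.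
    by rewrite mulr_gt0 // lt_neqAle eq_sym aj nz_ge0.
  apply/nbhs_ballP; exists (e%:C)%C.
    by have : (0:R[i]) < e%:C%C by rewrite ltcE /= eqxx e0.
  move=> z /ball_rV [_ /(_ j)] hz.
  have := le_lt_trans (nz_dist _ _) hz; rewrite -/(a j) ltr_distlC => /andP[hz1 hz2].
  split => aj.
    move: hz2; rewrite /e aj (eqP aj) add0r; exact: ltW.
  have aj0 : 0 < a j by rewrite lt_neqAle eq_sym aj nz_ge0.
  have [h1 h2] := tq_ineq _ _ Q0 Q1 aj0.
  move: hz1 hz2; rewrite /e (negbTE aj) => hz1 hz2.
  apply/andP; split; first exact: le_trans h1 (ltW hz1).
  by move: h2; rewrite /Q invrK; apply: le_trans; apply: ltW.
have hnear := @filter_forall _ _ cond (nbhs z0) (nbhs_filter z0) hj.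
apply: filterS hnear => z hz al hal.
set sg := [ffun j => 0 <= al ord0 j].
set p := \row_j (pr sg j)%:C%C.
have pr0 : forall j, 0 < pr sg j.
  move=> j; rewrite /pr; case: eqP => [_|/eqP wj]; first done.
  have wj0 : 0 < w0r j by rewrite lt_neqAle eq_sym wj w0.
  have d0 : 0 < 1 + dl by rewrite addr_gt0.
  by case: (sg j); [rewrite mulr_gt0 | rewrite divr_gt0].
set N := nA (monoA Omega iota al).
set E := \prod_j pr sg j ^ al ord0 j.
have EE : nz (emono al p) = E.
  rewrite /emono nz_prod; apply: eq_bigr => j _.
  by rewrite nzXz /p mxE nzR ger0_norm // ltW.
have E0 : 0 < E by rewrite prodr_gt0 // => j _; exact: exprz_gt0.
have EN : E <= c * N.
  rewrite -EE -(@monoA_rep n Omega A iota al hal _ (hp sg)).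
  apply: le_trans (proj2 (hcf sg) _) _; apply: ler_wpM2r; [exact: nA_ge0 | exact: cfc].
have N0 : 0 < N.
  have : 0 < c * N by apply: lt_le_trans EN.
  by rewrite pmulr_rgt0.
have Nm : 0 < N `^ m by apply: powR_gt0.
rewrite ler_pdivrMr //.
have Em : E `^ m <= c `^ m * N `^ m.
  rewrite -powRM ?(ltW c0) ?(ltW N0) //.
  by apply: ge0_ler_powR; rewrite ?nnegrE ?(ltW m0) ?(ltW E0) ?mulr_ge0 ?(ltW c0) ?(ltW N0).
have key : nz (emono al z) <= E `^ m * \prod_j t ^+ `|al ord0 j|%N.
  have -> : E `^ m = \prod_j (pr sg j `^ m) ^ al ord0 j.
    rewrite powR_prod; last by move=> j; rewrite exprz_ge0 // ltW.
    by apply: eq_bigr => j _; rewrite powRXz // ltW.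
  rewrite /emono nz_prod -big_split /=; apply: ler_prod => j _.
  rewrite nzXz exprz_ge0 ?nz_ge0 //=.
  suff [c1 c2] : (0 < al ord0 j -> nz (z ord0 j) <= t * pr sg j `^ m) /\
      (al ord0 j < 0 -> pr sg j `^ m / t <= nz (z ord0 j)).
    by apply: coord_ineq; rewrite ?nz_ge0 ?powR_gt0.
  case: (hz j) => hz1 hz2.
  have d0 : 0 < 1 + dl by rewrite addr_gt0.
  have [aj|aj] := eqVneq (a j) 0.
    have wj : w0r j == 0 by rewrite wz aj.
    have alj : 0 <= al ord0 j.
      apply: (@excl n Omega A iota al _ j hb oO hal Ow0); by rewrite mxE (eqP wj).
    rewrite /pr wj; split => hk; first by apply: hz1; exact/eqP.
    by move: alj; rewrite leNgt hk.
  have wj : w0r j != 0 by rewrite wz.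
  have w0j : 0 <= w0r j := w0 j.
  move/(_ aj)/andP: hz2 => [hz2 hz3].
  rewrite /pr (negbTE wj) /sg ffunE.
  case: (leP 0 (al ord0 j)) => hk.
    by rewrite powRM ?(ltW d0) // wa; split => // _; exact: hz3.
  rewrite powRM ?invr_ge0 ?(ltW d0) // powR_invx ?(ltW d0) // wa.
  split => [hk'|_]; last exact: hz2.
  by move: hk'; rewrite ltNge (ltW hk).
apply: le_trans key _.
rewrite mulrAC; apply: ler_wpM2r; first by rewrite prodr_ge0 // => j _; rewrite exprn_ge0 // ltW.
exact: Em.
Qed.
Lemma geom_le (s : R) M : 0 <= s -> s < 1 -> \sum_(u < M) s ^+ u <= (1 - s)^-1.
Proof.
move=> s0 s1.
have h := subrXX 1 s M.
have -> : \sum_(u < M) s ^+ u = (1 - s ^+ M) / (1 - s).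
  rewrite expr1n in h; rewrite h mulrC mulKf ?subr_eq0 ?(gt_eqF s1) //.
  by apply: eq_bigr => i _; rewrite expr1n mul1r.
rewrite ler_pdivrMr ?subr_gt0 // mulVf ?subr_eq0 ?(gt_eqF s1) //.
by rewrite gerBl exprn_ge0.
Qed.

Definition posp (k : int) : nat := if 0 <= k then `|k|%N else 0%N.
Definition negp (k : int) : nat := if 0 <= k then 0%N else `|k|%N.
Lemma pospnegp (k : int) : (posp k + negp k = `|k|)%N.
Proof. by rewrite /posp /negp; case: ifP => _; rewrite ?addn0. Qed.
Lemma pospnegpE (k : int) : k = (posp k)%:Z - (negp k)%:Z.
Proof.
rewrite /posp /negp; case: ifP => h.
  by rewrite subr0 gez0_abs.
by rewrite sub0r ltz0_abs ?opprK // ltNge h.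
Qed.

Lemma sum_rows n (s : R) (r : seq 'rV[int]_n) : 0 <= s -> s < 1 -> uniq r ->
  \sum_(al <- r) \prod_j s ^+ `|al ord0 j|%N <= ((1 - s)^-1 ^+ 2) ^+ n.
Proof.
move=> s0 s1 ur.
set N := (\max_(al <- r) \max_j `|al ord0 j|)%N.
have bnd : forall al, al \in r -> forall j, (`|al ord0 j| <= N)%N.
  move=> al alr j.
  have h1 := @leq_bigmax _ (fun j => `|al ord0 j|%N) j.
  have h2 := @leq_bigmax_seq _ r predT (fun al => \max_j `|al ord0 j|%N) al alr isT.
  exact: leq_trans h1 h2.
pose enc (al : 'rV[int]_n) : {ffun 'I_n -> 'I_N.+1 * 'I_N.+1} :=
  [ffun j => (inord (posp (al ord0 j)), inord (negp (al ord0 j)))].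
pose H (f : {ffun 'I_n -> 'I_N.+1 * 'I_N.+1}) := \prod_j (s ^+ (f j).1 * s ^+ (f j).2).
have pb : forall al, al \in r -> forall j, (posp (al ord0 j) < N.+1)%N /\ (negp (al ord0 j) < N.+1)%N.
  move=> al alr j; have := bnd al alr j; rewrite -pospnegp; lia.
have eqG : forall al, al \in r -> \prod_j s ^+ `|al ord0 j|%N = H (enc al).
  move=> al alr; apply: eq_bigr => j _; rewrite ffunE /= !inordK ?(proj1 (pb _ alr j)) ?(proj2 (pb _ alr j)) //.
  by rewrite -exprD pospnegp.
have inj : {in r &, injective enc}.
  move=> a1 a2 a1r a2r /ffunP he; apply/rowP => j.
  have := he j; rewrite !ffunE => -[/(congr1 val) h1 /(congr1 val) h2].
  move: h1 h2; rewrite /= !inordK ?(proj1 (pb _ a1r j)) ?(proj2 (pb _ a1r j)) ?(proj1 (pb _ a2r j)) ?(proj2 (pb _ a2r j)) // => h1 h2.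
  by rewrite (pospnegpE (a1 ord0 j)) (pospnegpE (a2 ord0 j)) h1 h2.
rewrite (eq_big_seq (fun al => H (enc al))) //.
rewrite -(big_map enc predT H).
have H0 : forall f, 0 <= H f by move=> f; apply: prodr_ge0 => j _; rewrite mulr_ge0 ?exprn_ge0.
have -> : \sum_(i <- [seq enc i | i <- r] | predT i) H i = \sum_(i <- [seq enc i | i <- r]) H i by [].
rewrite big_uniq ?map_inj_in_uniq //.
apply: (@le_trans _ _ (\sum_f H f)).
  rewrite [X in _ <= X](bigID (fun f => f \in [seq enc i | i <- r])) /= ler_wpDr //.
  by rewrite sumr_ge0.
rewrite /H -(bigA_distr_bigA (fun (i : 'I_n) (x : 'I_N.+1 * 'I_N.+1) => s ^+ x.1 * s ^+ x.2)) /=.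
rewrite prodr_const card_ord; apply: lerXn2r; rewrite ?nnegrE.
- by rewrite sumr_ge0 // => x _; rewrite mulr_ge0 ?exprn_ge0.
- by rewrite exprn_ge0 // invr_ge0 subr_ge0 ltW.
rewrite -(pair_bigA _ (fun u v : 'I_N.+1 => s ^+ u * s ^+ v)) /=.
under eq_bigr do rewrite -mulr_sumr.
rewrite -mulr_suml expr2.
have g := geom_le s (N.+1) s0 s1.
by apply: ler_pM => //; rewrite sumr_ge0 // => u _; rewrite exprn_ge0.
Qed.
End S.
Arguments nz {R}.
Arguments nA {R A}.
Arguments local_bound {R n Omega A iota m z0}.
Arguments sum_rows {R n}.

Theorem lemma3p3 (R : realType) (n : nat) (Omega : set 'rV[(R[i])^o]_n)
  (A : completeNormedModType ((R[i])^o)) (iota : A -> 'rV[(R[i])^o]_n -> (R[i])^o) :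
  is_domain Omega -> reinhardt Omega -> holo_banach Omega iota ->
  forall m : R, 0 < m ->
  forall K : set 'rV[(R[i])^o]_n, compact K -> K `<=` reinhardt_power Omega m ->
  (\esum_(alpha in [set alpha : 'rV[int]_n | mono_rep Omega iota alpha !=set0])
     ereal_sup [set ((complex.Re `|emono alpha z|) / (complex.Re `|monoA Omega iota alpha|) `^ m)%:E
               | z in K] < +oo)%E.
Proof.
move=> [_ [oO _]] _ hb m m0 K cK KO.
set I := [set alpha : 'rV[int]_n | mono_rep Omega iota alpha !=set0].
pose P := fun (i : R) (z : 'rV[(R[i])^o]_n) => forall al, I al ->
  nz (emono al z) / (nA (monoA Omega iota al)) `^ m <= i * \prod_j (1 - i^-1) ^+ `|al ord0 j|%N.
have hcov : \forall i \near +oo, K `<=` P i.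
  move/compact_near_coveringP: cK => /(_ R (pinfty_nbhs R) P _); apply.
  move=> z0 Kz0.
  have [Cc [t [C0 t0 t1 hloc]]] := local_bound hb oO m0 (KO z0 Kz0).
  have hi : \forall i \near +oo, Cc <= i /\ (1 - t)^-1 <= i /\ 1 <= i.
    near=> i; do !split; near: i; apply: nbhs_pinfty_ge; exact: num_real.
  near=> x i.
  have hx : forall al, I al -> nz (emono al x) / (nA (monoA Omega iota al)) `^ m <=
      Cc * \prod_j t ^+ `|al ord0 j|%N by near: x.
  have [h1 [h2 h3]] : Cc <= i /\ (1 - t)^-1 <= i /\ 1 <= i by near: i.
  rewrite /P /= => al Ial; apply: le_trans (hx al Ial) _.
  have i0 : 0 < i by apply: lt_le_trans h3.
  have ti : t <= 1 - i^-1.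
    have t1' : 0 < 1 - t by rewrite subr_gt0.
    have : i^-1 <= 1 - t.
      by rewrite -[leRHS]invrK lef_pV2 ?posrE ?invr_gt0.
    by rewrite lerBrDr addrC -lerBrDr.
  apply: ler_pM.
  - exact: ltW.
  - by apply: prodr_ge0 => j _; rewrite exprn_ge0 // ltW.
  - exact: h1.
  apply: ler_prod => j _; rewrite exprn_ge0 ?(ltW t0) //=.
  by apply: lerXn2r => //; rewrite nnegrE ?(ltW t0) // (le_trans (ltW t0) ti).
Unshelve. all: end_near.
have hcov' : \forall i \near +oo, K `<=` P i /\ 1 < i.
  by near=> i; split; near: i; [exact: hcov | apply: nbhs_pinfty_gt; exact: num_real].
have [i [hK i1]] := filter_ex hcov'.
set s := 1 - i^-1.
have i0 : 0 < i by apply: lt_trans i1.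
have s0 : 0 <= s by rewrite subr_ge0 invf_le1 // ltW.
have s1 : s < 1 by rewrite /s ltrBlDl ltrDr invr_gt0.
apply: (@le_lt_trans _ _ (\esum_(al in I) (i * \prod_j s ^+ `|al ord0 j|%N)%:E)).
  apply: le_esum => al Ial; apply: ge_ereal_sup => _ [z Kz <-].
  by rewrite lee_fin; exact: (hK z Kz al Ial).
apply: (@le_lt_trans _ _ (i * ((1 - s)^-1 ^+ 2) ^+ n)%:E); last exact: ltry.
rewrite /esum; apply: ge_ereal_sup => _ [X [finX XI] <-].
rewrite fsbig_finite //= sumEFin lee_fin -mulr_sumr ler_wpM2l ?(ltW i0) //.
apply: sum_rows => //; exact: finmap.fset_uniq.
Unshelve. all: end_near.
Qed.
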